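(* Let $\ell \ge 1$ and let $\mathcal{O} = \{\mathbf{p}^t, \mathbf{x}^t\}_{t=1}^T$ be a data set with $\mathbf{p}^t \in \mathbb{R}^\ell_{++}$ and $\mathbf{x}^t \in \mathbb{R}^\ell_+ \setminus \{\mathbf{0}\}$ for all $t$, and let $\mathbf{e} = \{e^t\}_{t=1}^T$ with $e^t \in (0,1]$ for all $t$. Then $\mathcal{O}$ obeys $\mathbf{e}$-GARP whenever any of the following conditions holds: (i) there is a consumption space $X \subseteq \mathbb{R}^\ell_+$ (containing all $\mathbf{x}^t$) and a utility function $U : X \to \mathbb{R}$ that both $\mathbf{e}$-rationalizes and $\mathbf{e}$-cost-rationalizes $\mathcal{O}$ (on $X$); (ii) $\mathcal{O}$ is $\mathbf{e}$-rationalizable (on $X=\mathbb{R}^\ell_+$) by a locally nonsatiated utility function $U : \mathbb{R}^\ell_+ \to \mathbb{R}$; (iii) $\mathcal{O}$ is $\mathbf{e}$-cost-rationalizable (on $X=\mathbb{R}^\ell_+$) by a continuous utility function $U : \mathbb{R}^\ell_+ \to \mathbb{R}$.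
   Context: For a consumption space $X\subseteq\mathbb{R}^\ell_+$ and $U:X\to\mathbb{R}$: $U$ $\mathbf{e}$-rationalizes $\mathcal{O}$ if for every $t$, $U(\mathbf{x}^t)\ge U(\mathbf{x})$ for all $\mathbf{x}\in X$ with $\mathbf{p}^t\cdot\mathbf{x}\le e^t\,\mathbf{p}^t\cdot\mathbf{x}^t$; $U$ $\mathbf{e}$-cost-rationalizes $\mathcal{O}$ if for every $t$, $e^t\,\mathbf{p}^t\cdot\mathbf{x}^t\le\mathbf{p}^t\cdot\mathbf{x}$ for all $\mathbf{x}\in X$ with $U(\mathbf{x})\ge U(\mathbf{x}^t)$. $U$ is locally nonsatiated if for every $\mathbf{x}$ and $\varepsilon>0$ there is $\mathbf{y}$ with $\|\mathbf{y}-\mathbf{x}\|<\varepsilon$ and $U(\mathbf{y})>U(\mathbf{x})$. Revealed preference relations: $\mathbf{x}^t \succcurlyeq_0^* \mathbf{x}^s$ (directly revealed preferred) if $\mathbf{p}^t\cdot\mathbf{x}^s \le e^t\,\mathbf{p}^t\cdot\mathbf{x}^t$; $\mathbf{x}^t \succ_0^* \mathbf{x}^s$ (strictly directly revealed preferred) if $\mathbf{p}^t\cdot\mathbf{x}^s < e^t\,\mathbf{p}^t\cdot\mathbf{x}^t$; $\mathbf{x}^t \succcurlyeq^* \mathbf{x}^s$ (revealed preferred) if there is a finite chain $\mathbf{x}^t \succcurlyeq_0^* \mathbf{x}^i \succcurlyeq_0^* \cdots \succcurlyeq_0^* \mathbf{x}^s$ among the observed bundles. $\mathcal{O}$ obeys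 $\mathbf{e}$-GARP if for all $t,s$, $\mathbf{x}^t \succcurlyeq^* \mathbf{x}^s$ implies that $\mathbf{x}^s \succ_0^* \mathbf{x}^t$ does not hold. *)

(* Defs.v *)
From HB Require Import structures.
From mathcomp Require Import all_boot all_order all_algebra.
From mathcomp Require Import all_classical all_reals all_analysis.
From Stdlib Require Import Relation_Operators.
Set Implicit Arguments. Unset Strict Implicit. Unset Printing Implicit Defensive.
Import Order.TTheory GRing.Theory Num.Theory.
Import numFieldNormedType.Exports.
Local Open Scope classical_set_scope.
Local Open Scope ring_scope.

Section Defs.
Variables (R : realType) (l : nat).

Definition dotp (p x : 'rV[R]_l) : R := \sum_(i < l) p ord0 i * x ord0 i.

Definition edist (x y : 'rV[R]_l) : R :=
  Num.sqrt (\sum_(i < l) (y ord0 i - x ord0 i) ^+ 2).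

Definition nonneg_orthant : set 'rV[R]_l := [set x | forall i, 0 <= x ord0 i].
Definition pos_orthant : set 'rV[R]_l := [set x | forall i, 0 < x ord0 i].

Variables (T : nat) (p x : 'I_T -> 'rV[R]_l) (e : 'I_T -> R).

Definition e_rationalizes (X : set 'rV[R]_l) (U : 'rV[R]_l -> R) : Prop :=
  forall t, forall y, X y -> dotp (p t) y <= e t * dotp (p t) (x t) ->
    U y <= U (x t).

Definition e_cost_rationalizes (X : set 'rV[R]_l) (U : 'rV[R]_l -> R) : Prop :=
  forall t, forall y, X y -> U (x t) <= U y ->
    e t * dotp (p t) (x t) <= dotp (p t) y.

Definition locally_nonsatiated (X : set 'rV[R]_l) (U : 'rV[R]_l -> R) : Prop :=
  forall z, X z -> forall eps : R, 0 < eps ->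
    exists y, X y /\ edist z y < eps /\ U z < U y.

Definition dir_rev_pref (t s : 'I_T) : Prop :=
  dotp (p t) (x s) <= e t * dotp (p t) (x t).
Definition strict_dir_rev_pref (t s : 'I_T) : Prop :=
  dotp (p t) (x s) < e t * dotp (p t) (x t).
Definition rev_pref : 'I_T -> 'I_T -> Prop := clos_trans _ dir_rev_pref.

Definition e_GARP : Prop :=
  forall t s, rev_pref t s -> ~ strict_dir_rev_pref s t.

End Defs.

(* Main.v *)
Require Import Defs.
From HB Require Import structures.
From mathcomp Require Import all_boot all_order all_algebra.
From mathcomp Require Import all_classical all_reals all_analysis.
From mathcomp Require Import lra.
Import Order.TTheory GRing.Theory Num.Theory.
Import numFieldNormedType.Exports.
Local Open Scope classical_set_scope.
Local Open Scope ring_scope.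

Lemma cont_lemma (R : realType) (l : nat) (A : set 'rV[R]_l) (U : 'rV[R]_l -> R) z c :
  {within A, continuous U} -> A z -> c < U z ->
  exists e : R, 0 < e /\ forall k, `|1 - k| < e -> A (k *: z) -> c < U (k *: z).
Proof.
move=> cU Az cz.
have H := cU z.
rewrite /continuous_at in H. have {}H : from_subspace A U y @[y --> within A (nbhs z)] --> U z by rewrite nbhs_subspace_in. 
have H2 : \forall y \near within A (nbhs z), c < from_subspace A U y.
  exact: (cvgr_gt (from_subspace A U z) H).
have hg : k *: z @[k --> (1:R)] --> z.
  rewrite -{2}(scale1r z); apply: cvgZr_tmp; exact: cvg_id.
have := hg _ H2.
move=> /nbhs_ballP [e e0 He].
exists e; split => // k hk Ak.
Qed.


Section Aux.
Variables (R : realType) (l : nat).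

Lemma dotpZ (q y : 'rV[R]_l) k : dotp q (k *: y) = k * dotp q y.
Proof. rewrite /dotp mulr_sumr; apply: eq_bigr => i _; by rewrite mxE mulrCA. Qed.

Lemma dotp_pos (q y : 'rV[R]_l) : pos_orthant q -> nonneg_orthant y -> y <> 0 ->
  0 < dotp q y.
Proof.
move=> hq hy y0.
have [i yi] : exists i, y ord0 i != 0.
  apply/not_existsP => H; apply: y0; apply/matrixP => a b.
  rewrite (ord1 a) !mxE; apply/eqP; apply/negPn/negP => hb; exact: (H b).
have yi' : 0 < y ord0 i by rewrite lt_def yi hy.
rewrite /dotp (bigD1 i) //=.
apply: (@lt_le_trans _ _ (q ord0 i * y ord0 i)); first exact: mulr_gt0.
rewrite lerDl; apply: sumr_ge0 => j _; apply: mulr_ge0; [exact: ltW | exact: hy].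
Qed.

Lemma edist_coord (y z : 'rV[R]_l) i : `|z ord0 i - y ord0 i| <= Defs.edist y z.
Proof.
rewrite /Defs.edist -sqrtr_sqr ler_sqrt; last by apply: sumr_ge0 => j _; exact: sqr_ge0.
rewrite (bigD1 i) //= lerDl; apply: sumr_ge0 => j _; exact: sqr_ge0.
Qed.

Lemma dotp_diff (q y z : 'rV[R]_l) : pos_orthant q ->
  dotp q z - dotp q y <= (\sum_(i < l) q ord0 i) * Defs.edist y z.
Proof.
move=> hq; rewrite /dotp -sumrB mulr_suml; apply: ler_sum => i _.
rewrite -mulrBr; apply: (le_trans (ler_norm _)); rewrite normrM.
rewrite ger0_norm; last exact: ltW.
apply: ler_wpM2l; [exact: ltW | exact: edist_coord].
Qed.
End Aux.

Lemma garp_of (R : realType) (l T : nat) (p x : 'I_T -> 'rV[R]_l) (e : 'I_T -> R)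
  (U : 'rV[R]_l -> R) :
  (forall t s, dir_rev_pref p x e t s -> U (x s) <= U (x t)) ->
  (forall s t, strict_dir_rev_pref p x e s t -> U (x t) < U (x s)) -> e_GARP p x e.
Proof.
move=> H1 H2 t s hts hst.
have : U (x s) <= U (x t).
  elim: hts => [a b /H1 //| a b c _ IH1 _ IH2]; exact: le_trans IH2 IH1.
by rewrite leNgt (H2 _ _ hst).
Qed.

Theorem proposition2 (R : realType) (l T : nat) (hl : (1 <= l)%N)
    (p x : 'I_T -> 'rV[R]_l) (e : 'I_T -> R)
    (hp : forall t, pos_orthant (p t))
    (hx : forall t, nonneg_orthant (x t) /\ x t <> 0)
    (he : forall t, 0 < e t <= 1) :
  ((exists (X : set 'rV[R]_l) (U : 'rV[R]_l -> R),
       X `<=` nonneg_orthant (R:=R) (l:=l) /\ (forall t, X (x t)) /\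
       e_rationalizes p x e X U /\ e_cost_rationalizes p x e X U)
   \/ (exists U : 'rV[R]_l -> R,
       locally_nonsatiated (@nonneg_orthant R l) U /\
       e_rationalizes p x e (@nonneg_orthant R l) U)
   \/ (exists U : 'rV[R]_l -> R,
       {within @nonneg_orthant R l, continuous U} /\
       e_cost_rationalizes p x e (@nonneg_orthant R l) U)) ->
  e_GARP p x e.
Proof.
case=> [[X [U [_ [Xx [hr hc]]]]]|[[U [lns hr]]|[U [cU hc]]]].
- apply: (@garp_of _ _ _ p x e U) => [t s hts|s t hst]; first exact: hr.
  rewrite ltNge; apply/negP => hle.
  have := hc s (x t) (Xx t) hle.
  by rewrite leNgt hst.
- apply: (@garp_of _ _ _ p x e U) => [t s hts|s t hst]; first exact: hr (hx s).1 hts.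
  rewrite /strict_dir_rev_pref in hst.
  set g := e s * dotp (p s) (x s) - dotp (p s) (x t).
  have g0 : 0 < g by rewrite subr_gt0.
  set P := \sum_(i < l) p s ord0 i.
  have P0 : 0 <= P by apply: sumr_ge0 => i _; exact: ltW (hp s i).
  have eps0 : 0 < g / (1 + P) by rewrite divr_gt0 // ltr_pwDl.
  have [y [Oy [dy Uy]]] := lns (x t) (hx t).1 _ eps0.
  apply: (lt_le_trans Uy); apply: hr (Oy) _.
  have hd := @dotp_diff R l (p s) (x t) y (hp s).
  have : P * Defs.edist (x t) y < g.
    apply: (@le_lt_trans _ _ ((1 + P) * Defs.edist (x t) y)).
      apply: ler_wpM2r; last by rewrite lerDr.
      by rewrite /Defs.edist sqrtr_ge0.
    by rewrite -ltr_pdivlMl ?ltr_pwDl // mulrC.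
  move=> h; have := le_lt_trans hd h; rewrite /g => h3; lra.
- apply: (@garp_of _ _ _ p x e U) => [t s hts|s t hst]; last first.
    rewrite ltNge; apply/negP => hle.
    have := hc s (x t) (hx t).1 hle.
    by rewrite leNgt hst.
  rewrite leNgt; apply/negP => lt.
  have [eps [eps0 H]] := @cont_lemma R l _ U _ _ cU (hx s).1 lt.
  have [m [m0 [me m1]]] : exists m : R, 0 < m /\ m < eps /\ m <= 1/2.
    by case: (leP eps 1) => h; [exists (eps/2) | exists (1/2)]; lra.
  have Ok : nonneg_orthant ((1 - m) *: x s).
    move=> i; rewrite mxE; apply: mulr_ge0; [lra | exact: (hx s).1].
  have hk : `|1 - (1 - m)| < eps by rewrite ger0_norm; lra.
  have := hc t _ Ok (ltW (H _ hk Ok)).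
  rewrite (@dotpZ R l).
  have := @dotp_pos R l _ _ (hp t) (hx s).1 (hx s).2.
  rewrite /dir_rev_pref in hts.
  move: hts => h1 h2 h3.
  have : m * dotp (p t) (x s) <= 0 by lra.
  by rewrite leNgt; move/negP; apply; apply: mulr_gt0.
Qed.
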